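(* Let $p=[p_1,\dots,p_m]^T\in A^m$, $A=\mathbb C[t_1,\dots,t_n]$. For each $i$ let $d_{ij}$ be the degree of $p_i$ in $t_j$ and $\mathcal E_{p_i}=\{\alpha\in\mathbb N_0^n:\alpha_j\le d_{ij}+1\text{ for }1\le j\le n\}=\{\alpha_{i1},\dots,\alpha_{il_i}\}$. Let $\mathrm{Der}_p$ be the tuple $(p_1,\partial^{\alpha_{11}}\bullet p_1,\dots,\partial^{\alpha_{1l_1}}\bullet p_1,\dots,p_m,\partial^{\alpha_{m1}}\bullet p_m,\dots,\partial^{\alpha_{ml_m}}\bullet p_m)$ of length $L=\sum_i(l_i+1)$, let $\mathrm{Syz}(\mathrm{Der}_p)=\{q\in A^{1\times L}:\sum_k q_k(\mathrm{Der}_p)_k=0\}$, let $M\in\mathcal W_n^{L\times m}$ be the matrix with rows $e_1,\partial^{\alpha_{11}}e_1,\dots,\partial^{\alpha_{1l_1}}e_1,\dots,e_m,\partial^{\alpha_{m1}}e_m,\dots,\partial^{\alpha_{ml_m}}e_m$, and let $\Phi_p:\mathrm{Syz}(\mathrm{Der}_p)\to\mathcal W_n^{1\times m}$, $q\mapsto q\cdot M$. Then $\Phi_p$ takes values in $\ker(\kappa_p)$ and the left $\mathcal W_n$-submodule generated by the image of $\Phi_p$ equals $\ker(\kappa_p)$.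
   Context: $\mathcal W_n$ is the $n$-th Weyl algebra $\mathbb C[t_1,\dots,t_n]\langle\partial_1,\dots,\partial_n\rangle$ with relations $\partial_it_j=t_j\partial_i+\delta_{ij}$, $t_it_j=t_jt_i$, $\partial_i\partial_j=\partial_j\partial_i$; it acts on $A=\mathbb C[t_1,\dots,t_n]$ by $\partial_i\bullet p=\partial p/\partial t_i$ and multiplication by $t_i$. Multi-index notation $\partial^\alpha=\partial_1^{\alpha_1}\cdots\partial_n^{\alpha_n}$. $e_i$ are the canonical basis vectors of $\mathcal W_n^{1\times m}$. For $p\in A^m$, $\ker(\kappa_p)=\{a\in\mathcal W_n^{1\times m}:\sum_ia_i\bullet p_i=0\}$. *)

(* Defs.v *)
From HB Require Import structures.
From mathcomp Require Import all_boot all_order all_algebra.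
Set Implicit Arguments. Unset Strict Implicit. Unset Printing Implicit Defensive.
Import Order.TTheory GRing.Theory Num.Theory.
Local Open Scope ring_scope.

Section Weyl.
Variables (F : numClosedFieldType) (n : nat).

Definition mon := {ffun 'I_n -> nat}.
Definition mon0 : mon := [ffun _ => 0%N].
Definition monD (a b : mon) : mon := [ffun j => (a j + b j)%N].
Definition monB (a b : mon) : mon := [ffun j => (a j - b j)%N].

(* A polynomial of A is a formal finite sum  sum c t^alpha  given as a list
   of (c, alpha); its coefficient of t^alpha is [pcoef]. *)
Definition Apoly := seq (F * mon).
Definition pcoef (p : Apoly) (a : mon) : F := \sum_(x <- p | x.2 == a) x.1.
Definition peq (p q : Apoly) : Prop := forall a, pcoef p a = pcoef q a.

(* An element of W_n in normal (PBW) form  sum c t^alpha d^beta, given as a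
   list of (c, alpha, beta); its coefficient is [wcoef]. *)
Definition weyl := seq (F * mon * mon).
Definition wcoef (w : weyl) (a b : mon) : F :=
  \sum_(x <- w | (x.1.2 == a) && (x.2 == b)) x.1.1.
Definition weq (w1 w2 : weyl) : Prop := forall a b, wcoef w1 a b = wcoef w2 a b.

Definition pmul (p q : Apoly) : Apoly :=
  [seq (x.1 * y.1, monD x.2 y.2) | x <- p, y <- q].

Definition polyW (p : Apoly) : weyl := [seq (x.1, x.2, mon0) | x <- p].
Definition dmon (a : mon) : weyl := [:: (1, mon0, a)].

(* action (bullet) of W_n on A:  t^a d^b . t^g = (prod_j g_j^(falling b_j)) t^(a+g-b) *)
Definition mact (x : F * mon * mon) (y : F * mon) : F * mon :=
  (x.1.1 * y.1 * (\prod_(j < n) (y.2 j ^_ x.2 j))%N%:R, monD x.1.2 (monB y.2 x.2)).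
Definition wact (w : weyl) (p : Apoly) : Apoly := [seq mact x y | x <- w, y <- p].

(* product in W_n, from the relations d_i t_j = t_j d_i + delta_ij:
   (t^a d^b)(t^g d^e) = sum_k prod_j C(b_j,k_j) g_j^(falling k_j) t^(a+g-k) d^(b-k+e) *)
Definition kk B (k : {ffun 'I_n -> 'I_B}) : mon := [ffun j => nat_of_ord (k j)].
Definition mmul (x y : F * mon * mon) : weyl :=
  let B := (\max_(j < n) x.2 j).+1 in
  [seq (x.1.1 * y.1.1 *
          (\prod_(j < n) ('C(x.2 j, k j) * (y.1.2 j ^_ k j)))%N%:R,
        monD x.1.2 (monB y.1.2 (kk k)), monD (monB x.2 (kk k)) y.2)
  | k : {ffun 'I_n -> 'I_B} <- enum {: {ffun 'I_n -> 'I_B}}].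
Definition wmul (w1 w2 : weyl) : weyl := flatten [seq mmul x y | x <- w1, y <- w2].

(* sizej p j = d_j + 1 where d_j is the degree of p in t_j (0 for p = 0) *)
Definition sizej (p : Apoly) (j : 'I_n) : nat :=
  (\max_(x <- p | pcoef p x.2 != 0%R) (x.2 j).+1)%N.

Definition Eset (p : Apoly) : seq mon :=
  let S := (\max_(j < n) sizej p j)%N in
  [seq kk k | k : {ffun 'I_n -> 'I_S.+1} <- enum {: {ffun 'I_n -> 'I_S.+1}}
            & [forall j, (k j <= sizej p j)%N]].

Section Vec.
Variables (m : nat) (p : 'I_m -> Apoly).

(* index list: entry (i, alpha) stands for d^alpha . p_i in Der_p and for the
   row d^alpha e_i of M; the leading (i, 0) of each block stands for p_i / e_i *)
Definition Didx : seq ('I_m * mon) :=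
  flatten [seq (i, mon0) :: [seq (i, a) | a <- Eset (p i)] | i <- enum 'I_m].
Definition Lp : nat := size Didx.
Definition didx (k : 'I_Lp) : 'I_m * mon := tnth (in_tuple Didx) k.

Definition Der (k : 'I_Lp) : Apoly := wact (dmon (didx k).2) (p (didx k).1).
Definition Mentry (k : 'I_Lp) (i : 'I_m) : weyl :=
  if (didx k).1 == i then dmon (didx k).2 else [::].

Definition Syz (q : 'I_Lp -> Apoly) : Prop :=
  forall a, pcoef (flatten [seq pmul (q k) (Der k) | k <- enum 'I_Lp]) a = 0.

Definition Phi (q : 'I_Lp -> Apoly) : 'I_m -> weyl :=
  fun i => flatten [seq wmul (polyW (q k)) (Mentry k i) | k <- enum 'I_Lp].

Definition kappa (a : 'I_m -> weyl) : Apoly :=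
  flatten [seq wact (a i) (p i) | i <- enum 'I_m].
Definition in_ker (a : 'I_m -> weyl) : Prop := forall b, pcoef (kappa a) b = 0.

Definition in_gen_image (a : 'I_m -> weyl) : Prop :=
  exists (r : nat) (w : 'I_r -> weyl) (qs : 'I_r -> 'I_Lp -> Apoly),
    (forall j, Syz (qs j)) /\
    (forall i, weq (a i) (flatten [seq wmul (w j) (Phi (qs j) i) | j <- enum 'I_r])).

End Vec.
End Weyl.

Arguments Didx {F n m} p.
Arguments Lp {F n m} p.
Arguments didx {F n m} p k.
Arguments Der {F n m} p k.
Arguments Mentry {F n m} p k i.
Arguments Syz {F n m} p q.
Arguments Phi {F n m} p q i.
Arguments kappa {F n m} p a.
Arguments in_ker {F n m} p a.
Arguments in_gen_image {F n m} p a.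

(* Main.v *)
Require Import Defs.
From HB Require Import structures.
From mathcomp Require Import all_boot all_order all_algebra.
From Stdlib Require Import Lia ArithRing.
Set Implicit Arguments. Unset Strict Implicit. Unset Printing Implicit Defensive.
Import Order.TTheory GRing.Theory Num.Theory.
Local Open Scope ring_scope.

Lemma ffactD (x a b : nat) : (x ^_ (a + b) = x ^_ a * (x - a) ^_ b)%N.
Proof.
elim: b => [|b IH]; first by rewrite addn0 ffactn0 muln1.
by rewrite addnS !ffactnSr IH subnDA mulnA.
Qed.

Lemma vander_ffact (g w b : nat) :
  (\sum_(t < b.+1) 'C(b, t) * g ^_ t * w ^_ (b - t) = (g + w) ^_ b)%N.
Proof.
rewrite -bin_ffact -binomial.Vandermonde big_distrl /=.
apply: eq_bigr => [[t /= Ht]] _.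
rewrite -!bin_ffact -(@bin_fact b t) //.
set a := 'C(b, t); set c := 'C(g, t); set d := 'C(w, b - t); set e := t`!; set f := (b - t)`!.
clearbody a c d e f.
rewrite -!multE. ring.
Qed.

Lemma sum_trunc (B b : nat) (H : nat -> nat) : (b < B)%N ->
  (forall t, (b < t)%N -> H t = 0%N) ->
  (\sum_(t < B) H t = \sum_(t < b.+1) H t)%N.
Proof.
move=> hb hH; rewrite -!(big_mkord xpredT) (big_cat_nat _ (n:=b.+1)) //=.
rewrite [X in (_ + X)%N]big_nat_cond [X in (_ + X)%N]big1 ?addn0 // => t /andP[/andP[ht _] _].
exact: hH.
Qed.

Lemma sumj (B be g z e : nat) : (be < B)%N ->
  (\sum_(t < B) ('C(be, t) * g ^_ t * z ^_ ((be - t) + e)) =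
   z ^_ e * (g + (z - e)) ^_ be)%N.
Proof.
move=> hB.
case: (ltnP z e) => hze.
  rewrite [X in (_ = X * _)%N]ffact_small // mul0n big1 // => t _.
  by rewrite [X in (_ * X)%N]ffact_small ?muln0 // (leq_trans hze) // leq_addl.
under eq_bigr => t _ do rewrite addnC ffactD mulnCA -!mulnA.
rewrite -big_distrr /=; congr (_ * _)%N.
rewrite (@sum_trunc B be (fun t => 'C(be, t) * (g ^_ t * (z - e) ^_ (be - t)))%N) //; last by move=> t ht; rewrite bin_small.
by rewrite -vander_ffact; apply: eq_bigr => t _; rewrite !mulnA.
Qed.

Lemma prod_sum_id (n B : nat) (be ga g e : 'I_n -> nat) :
  (forall j, be j < B)%N ->
  (\sum_(k : {ffun 'I_n -> 'I_B})
     ((\prod_(j < n) ('C(be j, k j) * ga j ^_ (k j))) *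
      (\prod_(j < n) (g j ^_ ((be j - k j) + e j)))) =
   (\prod_(j < n) (g j ^_ (e j))) * (\prod_(j < n) ((ga j + (g j - e j)) ^_ (be j))))%N.
Proof.
move=> hB.
under eq_bigr => k _ do rewrite -big_split /=.
rewrite -big_split /=.
rewrite -(bigA_distr_bigA (fun j (t : 'I_B) => 'C(be j, t) * ga j ^_ t * g j ^_ (be j - t + e j))%N).
by apply: eq_bigr => j _; rewrite sumj.
Qed.

Lemma expo (a ga g be e k : nat) : (k <= be)%N -> (k <= ga)%N -> (be - k + e <= g)%N ->
  (a + (ga - k) + (g - (be - k + e)) = a + (ga + (g - e) - be))%N.
Proof. move=> /ssrnat.leP h1 /ssrnat.leP h2 /ssrnat.leP h3. rewrite -?minusE -?plusE in h1 h2 h3 *. lia. Qed.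


Section S.
Variables (F : numClosedFieldType) (n : nat).
Local Notation mon := (mon n).
Local Notation Apoly := (Apoly F n).
Local Notation weyl := (weyl F n).

Lemma rep (X : Type) (T : eqType) (s : seq X) (key : X -> T) (c : X -> F)
  (G : T -> F) (S : seq T) : uniq S -> {subset map key s <= S} ->
  \sum_(x <- s) c x * G (key x) = \sum_(g <- S) (\sum_(x <- s | key x == g) c x) * G g.
Proof.
move=> uS sub.
under [RHS]eq_bigr => g _ do rewrite big_distrl /= big_mkcond /=.
rewrite exchange_big /=.
elim: s sub => [|x s IH] sub; first by rewrite !big_nil.
rewrite !big_cons IH; last by move=> g gi; apply: sub; rewrite inE gi orbT.
congr (_ + _).
have kS : key x \in S by apply: sub; rewrite inE eqxx.
rewrite -big_mkcond /=.
rewrite (eq_bigr (fun _ => c x * G (key x))); last by move=> g /eqP <-.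
rewrite big_const_seq (@eq_count _ _ (pred1 (key x))); last by move=> g /=; rewrite eq_sym.
by rewrite count_uniq_mem // kS /= addr0.
Qed.

Definition psum (p : Apoly) (G : mon -> F) := \sum_(y <- p) y.1 * G y.2.
Definition wsum (w : weyl) (G : mon -> mon -> F) := \sum_(x <- w) x.1.1 * G x.1.2 x.2.

Lemma psum_cong p q G : peq p q -> psum p G = psum q G.
Proof.
move=> e; rewrite /psum.
have uS := undup_uniq (map snd (p ++ q)).
rewrite (@rep _ _ p snd fst G _ uS); last by move=> g gi; rewrite mem_undup map_cat mem_cat gi.
rewrite (@rep _ _ q snd fst G _ uS); last by move=> g gi; rewrite mem_undup map_cat mem_cat gi orbT.
by apply: eq_bigr => g _; have := e g; rewrite /pcoef => ->.
Qed.

Lemma psum_kill p G : (forall a, pcoef p a != 0 -> G a = 0) -> psum p G = 0.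
Proof.
move=> k; rewrite /psum.
rewrite (@rep _ _ p snd fst G _ (undup_uniq (map snd p))); last by move=> g; rewrite mem_undup.
rewrite big1 // => g _; have := k g; rewrite /pcoef.
by case: eqP => [-> _|_ ->]; rewrite ?mul0r ?mulr0.
Qed.

Lemma wsum_cong w1 w2 G : weq w1 w2 -> wsum w1 G = wsum w2 G.
Proof.
move=> e; rewrite /wsum.
pose key (x : F * mon * mon) := (x.1.2, x.2).
have uS := undup_uniq (map key (w1 ++ w2)).
have h1 := @rep _ _ w1 key (fun x => x.1.1) (fun g => G g.1 g.2) _ uS.
have h2 := @rep _ _ w2 key (fun x => x.1.1) (fun g => G g.1 g.2) _ uS.
rewrite /= in h1 h2.
rewrite h1; last by move=> g gi; rewrite mem_undup map_cat mem_cat gi.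
rewrite h2; last by move=> g gi; rewrite mem_undup map_cat mem_cat gi orbT.
apply: eq_bigr => [[a b]] _; have := e a b; rewrite /wcoef /key.
by move=> h /=; congr (_ * _); exact: h.
Qed.

Lemma pcoef_psum p a : pcoef p a = psum p (fun g => (g == a)%:R).
Proof. by rewrite /pcoef /psum big_mkcond; apply: eq_bigr => y _; case: eqP; rewrite ?mulr1 ?mulr0. Qed.

Lemma wcoef_wsum w a b : wcoef w a b = wsum w (fun a' b' => ((a' == a) && (b' == b))%:R).
Proof. by rewrite /wcoef /wsum big_mkcond; apply: eq_bigr => y _; case: andP; rewrite ?mulr1 ?mulr0. Qed.

Lemma psum_cat p q G : psum (p ++ q) G = psum p G + psum q G.
Proof. by rewrite /psum big_cat. Qed.

Lemma wsum_cat p q G : wsum (p ++ q) G = wsum p G + wsum q G.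
Proof. by rewrite /wsum big_cat. Qed.

Lemma psum_flatten (I : Type) (s : seq I) (f : I -> Apoly) G :
  psum (flatten [seq f i | i <- s]) G = \sum_(i <- s) psum (f i) G.
Proof. elim: s => [|i s IH]; first by rewrite big_nil /psum big_nil. by rewrite big_cons /= -IH -psum_cat. Qed.

Lemma wsum_flatten (I : Type) (s : seq I) (f : I -> weyl) G :
  wsum (flatten [seq f i | i <- s]) G = \sum_(i <- s) wsum (f i) G.
Proof. elim: s => [|i s IH]; first by rewrite big_nil /wsum big_nil. by rewrite big_cons /= -IH -wsum_cat. Qed.

Lemma psum_linear p G1 G2 : psum p (fun g => G1 g + G2 g) = psum p G1 + psum p G2.
Proof. by rewrite /psum -big_split; apply: eq_bigr => y _; rewrite mulrDr. Qed.

Definition actc (b g : mon) : F := (\prod_(j < n) (g j ^_ b j))%N%:R.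

Lemma psum_wact w p G :
  psum (wact w p) G = wsum w (fun a b => psum p (fun g => actc b g * G (monD a (monB g b)))).
Proof.
rewrite /psum /wsum /wact big_allpairs_dep; apply: eq_bigr => x _.
rewrite big_distrr; apply: eq_bigr => y _ /=.
by rewrite /actc !mulrA.
Qed.

Lemma psum_pmul q r G :
  psum (pmul q r) G = psum q (fun a => psum r (fun g => G (monD a g))).
Proof.
rewrite /psum /pmul big_allpairs_dep; apply: eq_bigr => x _.
by rewrite big_distrr; apply: eq_bigr => y _ /=; rewrite mulrA.
Qed.

Lemma wsum_wmul w1 w2 G :
  wsum (wmul w1 w2) G = \sum_(x1 <- w1) \sum_(x2 <- w2) wsum (mmul x1 x2) G.
Proof.
have fl : forall L : seq weyl, wsum (flatten L) G = \sum_(l <- L) wsum l G.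
  elim=> [|l L IH]; first by rewrite big_nil /wsum big_nil.
  by rewrite big_cons /= wsum_cat IH.
rewrite /wmul fl.
by rewrite big_allpairs_dep.
Qed.

Lemma wsum_mmul_act x1 x2 g G :
  wsum (mmul x1 x2) (fun a b => actc b g * G (monD a (monB g b))) =
  x1.1.1 * x2.1.1 * (actc x2.2 g * actc x1.2 (monD x2.1.2 (monB g x2.2))) *
  G (monD x1.1.2 (monB (monD x2.1.2 (monB g x2.2)) x1.2)).
Proof.
case: x1 => [[c1 a] be]; case: x2 => [[c2 ga] e] /=.
rewrite /wsum /mmul big_map big_enum /=.
set B := (\max_(j < n) be j).+1.
have hB : forall j, (be j < B)%N by move=> j; rewrite ltnS (leq_bigmax j).
set E := monD a (monB (monD ga (monB g e)) be).
pose P (k : {ffun 'I_n -> 'I_B}) := (\prod_(j < n) ('C(be j, k j) * ga j ^_ (k j)))%N.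
pose Q (k : {ffun 'I_n -> 'I_B}) := (\prod_(j < n) (g j ^_ ((be j - k j) + e j)))%N.
transitivity (\sum_(k : {ffun 'I_n -> 'I_B}) c1 * c2 * ((P k * Q k)%N%:R * G E)).
  apply: eq_bigr => k _ /=.
  have hQ : actc (monD (monB be (kk k)) e) g = (Q k)%:R.
    by rewrite /actc /Q; congr (_%:R); apply: eq_bigr => j _; rewrite !ffunE.
  rewrite hQ -/(P k).
  case: (boolP (P k * Q k == 0)%N) => hz.
    have h : (P k)%:R * (Q k)%:R = 0 :> F by rewrite -natrM (eqP hz).
    by rewrite (eqP hz) mul0r mulr0 mulrA -(mulrA (c1 * c2)) h mulr0 mul0r.
  have : (0 < P k)%N /\ (0 < Q k)%N.
    by move: hz; rewrite muln_eq0 negb_or !lt0n => /andP[-> ->].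
  case=> hP hQ0.
  have hE : monD (monD a (monB ga (kk k))) (monB g (monD (monB be (kk k)) e)) = E.
    apply/ffunP => j; rewrite /E !ffunE.
    have := gt0_prodn hP j isT; rewrite muln_gt0 bin_gt0 ffact_gt0 => /andP[h1 h2].
    have := gt0_prodn hQ0 j isT; rewrite ffact_gt0 => h3.
    exact: expo.
  by rewrite hE natrM !mulrA.
rewrite -big_distrr /= -big_distrl /= -natr_sum prod_sum_id //.
rewrite /actc natrM !mulrA; congr (_ * _ * _ * _ * _).
by congr (_%:R); apply: eq_bigr => j _; rewrite !ffunE.
Qed.

Lemma wsum_psum w p K :
  wsum w (fun a b => psum p (K a b)) = psum p (fun g => wsum w (fun a b => K a b g)).
Proof.
rewrite /wsum /psum.
under eq_bigr => x _ do rewrite big_distrr /=.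
rewrite exchange_big /=; apply: eq_bigr => y _.
by rewrite big_distrr /=; apply: eq_bigr => x _; rewrite mulrCA.
Qed.

Lemma psum_scale p c K : c * psum p K = psum p (fun g => c * K g).
Proof. by rewrite /psum big_distrr /=; apply: eq_bigr => y _; rewrite mulrCA. Qed.

Lemma wact_assoc w1 w2 p G :
  psum (wact (wmul w1 w2) p) G = psum (wact w1 (wact w2 p)) G.
Proof.
rewrite psum_wact wsum_wmul psum_wact /wsum.
apply: eq_bigr => x1 _.
rewrite psum_wact /wsum big_distrr /=; apply: eq_bigr => x2 _.
rewrite -[LHS]/(wsum (mmul x1 x2) (fun a b => psum p (fun g => actc b g * G (monD a (monB g b))))).
rewrite wsum_psum !psum_scale /psum; apply: eq_bigr => y _; rewrite wsum_mmul_act.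
by rewrite !mulrA.
Qed.

Lemma wsum_mmul_simple x y G : (x.2 = mon0 n \/ y.1.2 = mon0 n) ->
  wsum (mmul x y) G = x.1.1 * y.1.1 * G (monD x.1.2 y.1.2) (monD x.2 y.2).
Proof.
move=> hxy.
rewrite /wsum /mmul big_map big_enum /=.
set B := (\max_(j < n) x.2 j).+1.
rewrite (bigD1 [ffun _ => ord0]) //= [X in _ + X]big1 ?addr0.
  rewrite big1; last by move=> j _; rewrite ffunE bin0 ffactn0.
  have hk : forall z : mon, monB z (kk [ffun=> (ord0 : 'I_B)]) = z.
    by move=> z; apply/ffunP => j; rewrite !ffunE subn0.
  by rewrite !hk mulr1n mulr1.
move=> k hk.
case: (pickP (fun j => k j != ord0)) => [j hj | hnone].
  have hj' : (nat_of_ord (k j) == 0%N) = false := negbTE hj.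
  rewrite (bigD1 j) //=.
  case: hxy => ->; rewrite ffunE.
    by rewrite bin0n hj' /= mul0n mul0n mulr0 mul0r.
  by rewrite ffact0n hj' /= muln0 mul0n mulr0 mul0r.
exfalso; move: hk => /eqP; apply; apply/ffunP => j; rewrite ffunE.
by have := hnone j => /= /negbFE /eqP.
Qed.

Lemma monD0 (z : mon) : monD z (mon0 n) = z.
Proof. by apply/ffunP => j; rewrite !ffunE addn0. Qed.
Lemma mon0D (z : mon) : monD (mon0 n) z = z.
Proof. by apply/ffunP => j; rewrite !ffunE. Qed.
Lemma monB0 (z : mon) : monB z (mon0 n) = z.
Proof. by apply/ffunP => j; rewrite !ffunE subn0. Qed.

Lemma sum_enum_pred1 (m : nat) (i0 : 'I_m) (f : 'I_m -> F) :
  \sum_(i <- enum 'I_m) (if i0 == i then f i else 0) = f i0.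
Proof.
rewrite big_enum /= -big_mkcond /=.
by rewrite (big_pred1 i0) // => i; rewrite eq_sym.
Qed.

Lemma psum_Der (m : nat) (p : 'I_m -> Apoly) k G :
  psum (Der p k) G =
  psum (p (didx p k).1) (fun g => actc (didx p k).2 g * G (monB g (didx p k).2)).
Proof.
rewrite /Der psum_wact /wsum /dmon big_cons big_nil addr0 /= mul1r.
by apply: eq_bigr => y _; rewrite mon0D.
Qed.

Lemma psum_kappa_Phi (m : nat) (p : 'I_m -> Apoly) q G :
  psum (kappa p (Phi p q)) G =
  \sum_(k <- enum 'I_(Lp p)) psum (q k) (fun a =>
     psum (p (didx p k).1) (fun g => actc (didx p k).2 g * G (monD a (monB g (didx p k).2)))).
Proof.
rewrite /kappa psum_flatten.
under eq_bigr => i _ do rewrite psum_wact /Phi wsum_flatten.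
rewrite exchange_big /=; apply: eq_bigr => k _.
under eq_bigr => i _ do rewrite wsum_wmul /Mentry.
rewrite (eq_bigr (fun i => if (didx p k).1 == i then psum (q k) (fun a =>
     psum (p i) (fun g => actc (didx p k).2 g * G (monD a (monB g (didx p k).2)))) else 0)).
  by rewrite sum_enum_pred1.
move=> i _.
case: eqP => [<-|_]; last by rewrite big1 // => x1 _; rewrite big_nil.
rewrite /polyW big_map /psum; apply: eq_bigr => y _.
rewrite /dmon big_cons big_nil addr0 wsum_mmul_simple /=; last by right.
by rewrite mulr1 monD0 mon0D.
Qed.

Lemma psum_Syz (m : nat) (p : 'I_m -> Apoly) q G :
  psum (flatten [seq pmul (q k) (Der p k) | k <- enum 'I_(Lp p)]) G =
  \sum_(k <- enum 'I_(Lp p)) psum (q k) (fun a =>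
     psum (p (didx p k).1) (fun g => actc (didx p k).2 g * G (monD a (monB g (didx p k).2)))).
Proof.
rewrite psum_flatten; apply: eq_bigr => k _.
rewrite psum_pmul; rewrite {1}/psum; apply: eq_bigr => y _.
by rewrite (psum_Der k (fun g => G (monD y.2 g))).
Qed.

Lemma part1 (m : nat) (p : 'I_m -> Apoly) q : Syz p q -> in_ker p (Phi p q).
Proof.
move=> hS b; have := hS b; rewrite !pcoef_psum psum_Syz psum_kappa_Phi.
by [].
Qed.

Lemma wact_congL w1 w2 p G : weq w1 w2 -> psum (wact w1 p) G = psum (wact w2 p) G.
Proof. by move=> e; rewrite !psum_wact; apply: wsum_cong. Qed.

Lemma psum_wact_flatten (I : Type) (s : seq I) (f : I -> weyl) p G :
  psum (wact (flatten [seq f j | j <- s]) p) G = \sum_(j <- s) psum (wact (f j) p) G.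
Proof. by rewrite psum_wact wsum_flatten; apply: eq_bigr => j _; rewrite psum_wact. Qed.

Lemma wsum_sum (I : Type) (s : seq I) w (f : I -> mon -> mon -> F) :
  wsum w (fun a b => \sum_(i <- s) f i a b) = \sum_(i <- s) wsum w (f i).
Proof.
rewrite /wsum; under eq_bigr => x _ do rewrite big_distrr.
by rewrite exchange_big.
Qed.

Lemma part2 (m : nat) (p : 'I_m -> Apoly) a : in_gen_image p a -> in_ker p a.
Proof.
case=> r [w [qs [hS he]]] b.
rewrite pcoef_psum /kappa psum_flatten.
under eq_bigr => i _ do rewrite (wact_congL _ _ (he i)) psum_wact_flatten.
rewrite exchange_big /= big1 // => j _.
under eq_bigr => i _ do rewrite wact_assoc psum_wact.
rewrite -wsum_sum /wsum big1 // => x _.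
have hk := part1 (hS j).
rewrite -(psum_flatten (enum 'I_m) (fun i => wact (Phi p (qs j) i) (p i))) -/(kappa p (Phi p (qs j))).
by rewrite psum_kill ?mulr0 // => g; rewrite hk eqxx.
Qed.

Lemma wsum_mmul_scale x c a b G :
  wsum (mmul x (c, a, b)) G = c * wsum (mmul x (1, a, b)) G.
Proof.
rewrite /wsum /mmul !big_map big_distrr /=; apply: eq_bigr => k _.
by rewrite mulr1 !mulrA [x.1.1 * c]mulrC.
Qed.

Lemma wmul_congR w1 w2 w2' G : weq w2 w2' -> wsum (wmul w1 w2) G = wsum (wmul w1 w2') G.
Proof.
move=> e; rewrite !wsum_wmul; apply: eq_bigr => x1 _.
transitivity (wsum w2 (fun a b => wsum (mmul x1 (1, a, b)) G)).
  rewrite /wsum; apply: eq_bigr => [[[c a] b]] _; exact: wsum_mmul_scale.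
rewrite (wsum_cong _ e) /wsum; apply: eq_bigr => [[[c a] b]] _.
by symmetry; exact: wsum_mmul_scale.
Qed.

Lemma wsum_Phi (m : nat) (p : 'I_m -> Apoly) q i G :
  wsum (Phi p q i) G = \sum_(k <- enum 'I_(Lp p))
     psum (q k) (fun al => if (didx p k).1 == i then G al (didx p k).2 else 0).
Proof.
rewrite /Phi wsum_flatten; apply: eq_bigr => k _.
rewrite wsum_wmul /Mentry.
case: eqP => _; last first.
  rewrite big1; last by move=> x1 _; rewrite big_nil.
  by rewrite /psum big1 // => y _; rewrite mulr0.
rewrite /polyW big_map /psum; apply: eq_bigr => y _.
rewrite /dmon big_cons big_nil addr0 wsum_mmul_simple /=; last by right.
by rewrite mulr1 monD0 mon0D.
Qed.

End S.


Section P3.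
Variables (F : numClosedFieldType) (n : nat).
Local Notation mon := (mon n).
Local Notation Apoly := (Apoly F n).
Local Notation weyl := (weyl F n).

Lemma sizej_bound (P : Apoly) g j : pcoef P g != 0 -> (g j < sizej P j)%N.
Proof.
move=> hg.
have : has (fun x : F * mon => x.2 == g) P.
  apply/negPn/negP => hn; move: hg; rewrite /pcoef big_hasC // eqxx //.
case/hasP => x xP /eqP hx.
rewrite /sizej -hx.
apply: (@leq_bigmax_seq _ _ (fun y : F * mon => pcoef P y.2 != 0) (fun y => (y.2 j).+1) x xP).
by rewrite hx.
Qed.

Lemma actc_kill (P : Apoly) (b : mon) g : (exists j, sizej P j <= b j)%N ->
  pcoef P g != 0 -> actc F b g = 0.
Proof.
case=> j hj hg; rewrite /actc (bigD1 j) //= ffact_small ?mul0n //.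
exact: leq_trans (sizej_bound j hg) hj.
Qed.

Variables (m : nat) (p : 'I_m -> Apoly).

Lemma memD i (c : mon) : (forall j, c j <= sizej (p i) j)%N -> (i, c) \in Didx p.
Proof.
move=> hc; apply/flatten_mapP; exists i; first by rewrite mem_enum.
rewrite inE; apply/orP; right; apply/mapP; exists c => //.
rewrite /Eset; set S := (\max_(j < n) sizej (p i) j)%N.
have hS : forall j, (c j < S.+1)%N by move=> j; rewrite ltnS (leq_trans (hc j)) // (leq_bigmax j).
have -> : c = kk [ffun j => (inord (c j) : 'I_S.+1)].
  by apply/ffunP => j; rewrite !ffunE inordK.
apply: map_f; rewrite mem_filter mem_enum andbT; apply/forallP => j.
by rewrite ffunE inordK.
Qed.

Lemma didx_index v (k : 'I_(Lp p)) : v \in Didx p -> nat_of_ord k = index v (Didx p) -> didx p k = v.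
Proof.
move=> hv hk; rewrite /didx (tnth_nth v) /= hk.
exact: nth_index.
Qed.

Lemma sum_index v (h : 'I_m * mon -> F) : v \in Didx p ->
  \sum_(k <- enum 'I_(Lp p)) (if nat_of_ord k == index v (Didx p) then h (didx p k) else 0) = h v.
Proof.
move=> hv; rewrite big_enum /= -big_mkcond /=.
have hi : (index v (Didx p) < Lp p)%N by rewrite /Lp index_mem.
rewrite (big_pred1 (Ordinal hi)) /=; last by move=> k.
by rewrite (didx_index hv).
Qed.

Definition NK (i : 'I_m) (b : mon) : bool := [forall j, (b j < sizej (p i) j)%N].
Definition gam (i : 'I_m) (b : mon) : mon :=
  if [pick j | (sizej (p i) j <= b j)%N] is Some j
  then [ffun j' => if j' == j then sizej (p i) j else 0%N] else mon0 n.

Lemma gam_prop i b : ~~ NK i b ->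
  [/\ forall j, (gam i b j <= sizej (p i) j)%N, forall j, (gam i b j <= b j)%N &
      exists j, (sizej (p i) j <= gam i b j)%N].
Proof.
rewrite /NK negb_forall => /existsP [j0]; rewrite -leqNgt => hj0.
rewrite /gam; case: pickP => [j hj | hn]; last by move: (hn j0); rewrite hj0.
split.
- by move=> j'; rewrite ffunE; case: eqP => [->|].
- by move=> j'; rewrite ffunE; case: eqP => [->|].
- by exists j; rewrite ffunE eqxx.
Qed.

Lemma monDB (b c : mon) : (forall j, c j <= b j)%N -> monD (monB b c) c = b.
Proof. by move=> h; apply/ffunP => j; rewrite !ffunE subnK. Qed.

Lemma psum_one (X : Apoly) G : psum (pmul [:: (1, mon0 n)] X) G = psum X G.
Proof.
rewrite psum_pmul /psum big_cons big_nil addr0 mul1r /=.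
by apply: eq_bigr => y _; rewrite mon0D.
Qed.

Definition qk (t : 'I_m * (F * mon * mon)) (k : 'I_(Lp p)) : Apoly :=
  if nat_of_ord k == index (t.1, gam t.1 t.2.2) (Didx p) then [:: (1, mon0 n)] else [::].

Lemma syz_qk t : ~~ NK t.1 t.2.2 -> Syz p (qk t).
Proof.
case: t => i x /= h b.
have [h1 h2 h3] := gam_prop h.
rewrite pcoef_psum psum_flatten.
rewrite (eq_bigr (fun k => if nat_of_ord k == index (i, gam i x.2) (Didx p) then
   psum (wact (dmon F (didx p k).2) (p (didx p k).1)) (fun g => (g == b)%:R) else 0)); last first.
  move=> k _; rewrite /qk /=; case: eqP => _; first by rewrite psum_one.
  by rewrite /psum /pmul big_nil.
rewrite (sum_index (fun v => psum (wact (dmon F v.2) (p v.1)) (fun g => (g == b)%:R))); last exact: memD.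
rewrite psum_wact /wsum /dmon big_cons big_nil addr0 mul1r /=.
by apply: psum_kill => g hg; rewrite (actc_kill h3 hg) mul0r.
Qed.

Lemma NK_le i b : NK i b -> forall j, (b j <= sizej (p i) j)%N.
Proof. by move=> /forallP h j; apply: ltnW. Qed.

Lemma cond_eq (k : 'I_(Lp p)) i (b : mon) :
  (NK i b && (nat_of_ord k == index (i, b) (Didx p))) =
  [&& (i == (didx p k).1), (b == (didx p k).2),
      (nat_of_ord k == index (didx p k) (Didx p)) & NK (didx p k).1 (didx p k).2].
Proof.
case hN: (NK i b) => /=.
  case hk: (nat_of_ord k == index (i, b) (Didx p)).
    by rewrite (didx_index (memD (NK_le hN)) (eqP hk)) !eqxx hk hN.
  apply/esym/negbTE/and4P => [[/eqP e1 /eqP e2 e3 _]].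
  by move: hk; rewrite e1 e2 -surjective_pairing e3.
apply/esym/negbTE/and4P => [[/eqP e1 /eqP e2 _ e4]].
by move: hN; rewrite e1 e2 e4.
Qed.

Variable a : 'I_m -> weyl.

Definition q0 (k : 'I_(Lp p)) : Apoly :=
  if (nat_of_ord k == index (didx p k) (Didx p)) && NK (didx p k).1 (didx p k).2
  then [seq (x.1.1, x.1.2) | x <- a (didx p k).1 & x.2 == (didx p k).2] else [::].

Lemma q0_sum (Phi0 : 'I_m -> mon -> mon -> F) :
  \sum_(k <- enum 'I_(Lp p)) psum (q0 k) (fun al => Phi0 (didx p k).1 al (didx p k).2) =
  \sum_(i <- enum 'I_m) \sum_(x <- a i | NK i x.2) x.1.1 * Phi0 i x.1.2 x.2.
Proof.
symmetry.
transitivity (\sum_(i <- enum 'I_m) \sum_(x <- a i) \sum_(k <- enum 'I_(Lp p))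
   (if NK i x.2 && (nat_of_ord k == index (i, x.2) (Didx p))
    then x.1.1 * Phi0 (didx p k).1 x.1.2 (didx p k).2 else 0)).
  apply: eq_bigr => i _; rewrite big_mkcond /=; apply: eq_bigr => x _.
  case: (boolP (NK i x.2)) => hN /=; last by rewrite big1.
  by rewrite (sum_index (fun v => x.1.1 * Phi0 v.1 x.1.2 v.2)) //; apply: memD; apply: NK_le.
under eq_bigr => i _ do rewrite exchange_big /=.
rewrite exchange_big /=; apply: eq_bigr => k _.
under eq_bigr => i _ do under eq_bigr => x _ do rewrite cond_eq.
rewrite (eq_bigr (fun i => if (didx p k).1 == i then
   \sum_(x <- a i) (if [&& x.2 == (didx p k).2, nat_of_ord k == index (didx p k) (Didx p)
       & NK (didx p k).1 (didx p k).2] then x.1.1 * Phi0 (didx p k).1 x.1.2 (didx p k).2 else 0)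
   else 0)); last first.
  move=> i _; case: eqP => [<-|ne] /=; first by rewrite eqxx.
  by rewrite big1 //; case: eqP => // e; exfalso; apply: ne; rewrite e.
rewrite sum_enum_pred1 /q0.
case: ((nat_of_ord k == index (didx p k) (Didx p)) && NK (didx p k).1 (didx p k).2) => /=.
  rewrite /psum big_map big_filter [RHS]big_mkcond /=; apply: eq_bigr => x _; by rewrite andbT.
by rewrite /psum big_nil big1 // => x _; rewrite andbF.
Qed.

Lemma notNK_ex i b : ~~ NK i b -> exists j, (sizej (p i) j <= b j)%N.
Proof. by rewrite /NK negb_forall => /existsP [j]; rewrite -leqNgt; exists j. Qed.

Lemma kappa_split b :
  pcoef (kappa p a) b = \sum_(i <- enum 'I_m) \sum_(x <- a i | NK i x.2) x.1.1 *
     psum (p i) (fun g => actc F x.2 g * (monD x.1.2 (monB g x.2) == b)%:R).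
Proof.
rewrite pcoef_psum /kappa psum_flatten; apply: eq_bigr => i _.
rewrite psum_wact /wsum (bigID (fun x => NK i x.2)) /= [X in _ + X]big1 ?addr0 //.
move=> x hx; rewrite psum_kill ?mulr0 // => g hg.
by rewrite (actc_kill (notNK_ex hx) hg) mul0r.
Qed.

Lemma syz_q0 : in_ker p a -> Syz p q0.
Proof.
move=> hk b; rewrite pcoef_psum psum_Syz.
have e := q0_sum (fun i al be => psum (p i) (fun g => actc F be g * (monD al (monB g be) == b)%:R)).
rewrite /= in e; rewrite e -kappa_split; exact: hk.
Qed.

Definition Tk : seq ('I_m * (F * mon * mon)) :=
  [seq (i, x) | i <- enum 'I_m, x <- [seq x <- a i | ~~ NK i x.2]].
Definition wk (t : 'I_m * (F * mon * mon)) : weyl :=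
  [:: (t.2.1.1, t.2.1.2, monB t.2.2 (gam t.1 t.2.2))].
Definition LL : seq (weyl * ('I_(Lp p) -> Apoly)) :=
  [seq (wk t, qk t) | t <- Tk] ++ [:: ([:: (1, mon0 n, mon0 n)], q0)].
Definition dflt : weyl * ('I_(Lp p) -> Apoly) := ([::], fun _ => [::]).

Lemma Tk_NK : all (fun t => ~~ NK t.1 t.2.2) Tk.
Proof. by apply/all_allpairsP => i x _; rewrite mem_filter => /andP[h _]. Qed.

Lemma LL_syz : in_ker p a -> forall j, (j < size LL)%N -> Syz p (nth dflt LL j).2.
Proof.
move=> hk j hj; rewrite nth_cat size_map.
case: ltnP => h.
  have hT := Tk_NK.
  move: h hT; case: Tk => [|t0 T'] // h hT.
  rewrite (nth_map t0) //=; apply: syz_qk.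
  exact: (all_nthP t0 hT j h).
move: hj; rewrite size_cat size_map /= addn1 ltnS => hj.
have -> : (j - size Tk = 0)%N by apply/eqP; rewrite subn_eq0.
exact: syz_q0.
Qed.

Lemma Phi_qk_weq t i : ~~ NK t.1 t.2.2 ->
  weq (Phi p (qk t) i) (if t.1 == i then [:: (1, mon0 n, gam t.1 t.2.2)] else [::]).
Proof.
move=> h a' b'; have [h1 h2 h3] := gam_prop h.
rewrite !wcoef_wsum wsum_Phi.
rewrite (eq_bigr (fun k => if nat_of_ord k == index (t.1, gam t.1 t.2.2) (Didx p) then
   (fun v : 'I_m * mon => if v.1 == i then ((mon0 n == a') && (v.2 == b'))%:R else 0 : F) (didx p k) else 0)); last first.
  move=> k _; rewrite /qk; case: eqP => _ /=.
    by rewrite /psum big_cons big_nil addr0 mul1r.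
  by rewrite /psum big_nil.
rewrite (sum_index (fun v : 'I_m * mon => if v.1 == i then ((mon0 n == a') && (v.2 == b'))%:R else 0 : F)) /=; last exact: memD.
case: eqP => _; last by rewrite /wsum big_nil.
by rewrite /wsum big_cons big_nil addr0 mul1r.
Qed.

Lemma LL_weq i al be : wcoef (a i) al be =
  \sum_(l <- LL) wsum (wmul l.1 (Phi p l.2 i)) (fun a' b' => ((a' == al) && (b' == be))%:R).
Proof.
set Gw := fun a' b' : mon => ((a' == al) && (b' == be))%:R : F.
rewrite big_cat big_map big_seq1 /=.
have -> : wsum (wmul [:: (1, mon0 n, mon0 n)] (Phi p q0 i)) Gw = wsum (Phi p q0 i) Gw.
  rewrite wsum_wmul big_cons big_nil addr0 /wsum; apply: eq_bigr => x2 _.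
  by rewrite -/(wsum _ _) wsum_mmul_simple /=; [rewrite mul1r !mon0D | left].
rewrite wsum_Phi.
have e := q0_sum (fun i' al0 be0 => if i' == i then Gw al0 be0 else 0).
rewrite /= in e; rewrite e.
rewrite (eq_bigr (fun i' => if i == i' then \sum_(x <- a i' | NK i' x.2) x.1.1 * Gw x.1.2 x.2 else 0)); last first.
  move=> i' _; rewrite eq_sym; case: eqP => _; last by rewrite big1 // => x _; rewrite mulr0.
  by [].
rewrite sum_enum_pred1.
rewrite (eq_big_seq (fun t => if t.1 == i then t.2.1.1 * Gw t.2.1.2 t.2.2 else 0)); last first.
  move=> t ht; have hN : ~~ NK t.1 t.2.2 by move/allP: Tk_NK; apply.
  have [h1 h2 h3] := gam_prop hN.
  rewrite (wmul_congR _ _ (Phi_qk_weq i hN)).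
  case: eqP => _; last by rewrite wsum_wmul /wk big_seq1 big_nil.
  rewrite wsum_wmul /wk !big_seq1 wsum_mmul_simple /=; last by right.
  by rewrite mulr1 monD0 monDB.
rewrite /Tk big_allpairs_dep /=.
rewrite (eq_bigr (fun i' => if i == i' then \sum_(x <- [seq x <- a i' | ~~ NK i' x.2]) x.1.1 * Gw x.1.2 x.2 else 0)); last first.
  move=> i' _; rewrite eq_sym; case: eqP => _ //.
  by rewrite big1.
rewrite sum_enum_pred1 big_filter wcoef_wsum /wsum (bigID (fun x => NK i x.2)) /=.
by rewrite addrC.
Qed.

End P3.


Theorem lemma5p1 (F : numClosedFieldType) (n m : nat) (p : 'I_m -> Apoly F n) :
  (forall q, Syz p q -> in_ker p (Phi p q)) /\
  (forall a : 'I_m -> weyl F n, in_ker p a <-> in_gen_image p a).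
Proof.
split; first by move=> q; exact: part1.
move=> a; split; last exact: part2.
move=> hk.
exists (size (LL p a)), (fun j => (nth (dflt p) (LL p a) j).1),
  (fun j => (nth (dflt p) (LL p a) j).2).
split; first by move=> j; exact: (LL_syz hk (ltn_ord j)).
move=> i al be; rewrite (LL_weq p) wcoef_wsum wsum_flatten.
rewrite (big_nth (dflt p)) big_mkord big_enum /=.
by apply: eq_bigl => j.
Qed.
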